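(* Let $n = n(j) = m_1 + m_2 + \cdots + m_j$ with $1 \leq j \leq j_{\max}$. In the Hermitian case described below, the structure-preserving Padé-type model with data matrices $\mathcal A_n = \mathcal V_n^H \mathcal A\, \mathcal V_n$, $\mathcal E_n = \mathcal V_n^H \mathcal E\, \mathcal V_n$, $\mathcal B_n = \mathcal V_n^H \mathcal B$, $\mathcal L_n = \mathcal L\, \mathcal V_n$, $\mathcal D_n = \mathcal D$ satisfies \[ H_n(s) = H(s) + {\mathcal O}\bigl((s-s_0)^{2 j(n)} \bigr), \] where $H_n(s) = \mathcal D_n + \mathcal L_n (s\mathcal E_n - \mathcal A_n)^{-1}\mathcal B_n$.
   Context: Consider a first-order system $\mathcal E\, \frac{d}{dt} z(t) - \mathcal A\, z(t) = \mathcal B\, u(t)$, $y(t) = \mathcal D\, u(t) + \mathcal L\, z(t)$, with regular pencil $s\mathcal E - \mathcal A$ and transfer function $H(s) = \mathcal D + \mathcal L (s\mathcal E - \mathcal A)^{-1}\mathcal B$, which is the equivalent first-order formulation of one of the following Hermitian systems. (a) A Hermitian special second-order system $P_1 \frac{d}{dt}x + P_0 x + P_{-1}\int_{t_0}^t x\,d\tau = B u$, $y = D u + L x$, with either $P_{-1} = F_1 G F_2^H$ or $P_{-1} = F_1 G^{-1} F_2^H$ ($G$ nonsingular), where Hermitian means $L = B^H$, $P_0 = P_0^H$, $P_1 = P_1^H$, $F_1 = F_2$, $G = G^H$. Here $P_0,P_1\in\mathbb{C}^{N\times N}$, $G\in\mathbb{C}^{N_0\times N_0}$, and the first-order data are $\mathcal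 B = \begin{bmatrix} B\\ 0\end{bmatrix}$, $\mathcal L = \begin{bmatrix} L & 0\end{bmatrix}$, $\mathcal D = D$, and either $\mathcal A = \begin{bmatrix} -P_0 & -F_1 G\\ (F_2G)^H & 0\end{bmatrix}$, $\mathcal E = \begin{bmatrix} P_1 & 0\\ 0 & G^H\end{bmatrix}$ (first case) or $\mathcal A = \begin{bmatrix} -P_0 & -F_1\\ F_2^H & 0\end{bmatrix}$, $\mathcal E = \begin{bmatrix} P_1 & 0\\ 0 & G\end{bmatrix}$ (second case). (b) A Hermitian $l$-th order system $P_l x^{(l)} + \cdots + P_1 x' + P_0 x = B u$, $y = D u + L_{l-1}x^{(l-1)} + \cdots + L_0 x$, where Hermitian means $P_i = P_i^H$ ($0\le i\le l$), $L_0 = B^H$, $L_j = 0$ ($1\le j\le l-1$); the first-order data are the companion form with state $(x, x', \dots, x^{(l-1)})$: $\mathcal E = \mathrm{diag}(I,\dots,I,P_l)$, $\mathcal A = -\begin{bmatrix} 0 & -I & & \\ & \ddots & \ddots & \\ & & 0 & -I\\ P_0 & P_1 & \cdots & P_{l-1}\end{bmatrix}$, $\mathcal B = \begin{bmatrix}0\\ \vdots\\ 0\\ B\end{bmatrix}$, $\mathcal L = \begin{bmatrix} L_0 & L_1 & \cdots & L_{l-1}\end{bmatrix}$, $\mathcal D = D$. Let $s_0 \in \mathbb{R}$ with $s_0\mathcal E - \mathcal A$ nonsingular, and set $\mathcal M = (s_0\mathcal E - \mathcal A)^{-1}\mathcal E$, $\mathcal R = (s_0\mathcal E - \mathcal A)^{-1}\mathcal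 B$. Deflating the block-Krylov matrix $[\mathcal R,\ \mathcal M\mathcal R,\ \mathcal M^2\mathcal R,\dots]$ (deleting columns linearly dependent on earlier ones) gives $[\mathcal R^{(1)},\ \mathcal M\mathcal R^{(2)},\dots,\mathcal M^{j_{\max}-1}\mathcal R^{(j_{\max})}]$ where block $\mathcal R^{(j)}$ has $m_j$ columns; for $n = m_1+\cdots+m_j$, the block-Krylov subspace is $\mathcal K_n(\mathcal M,\mathcal R) = \mathrm{range}[\mathcal R^{(1)}, \mathcal M\mathcal R^{(2)}, \dots, \mathcal M^{j-1}\mathcal R^{(j)}]$. The projection matrix $\mathcal V_n$ is: in case (a), $\mathcal V_n = \begin{bmatrix} V_1 & 0\\ 0 & V_2\end{bmatrix}$, where $\begin{bmatrix} V_1\\ V_2\end{bmatrix}$ ($V_1$ with $N$ rows, $V_2$ with $N_0$ rows) is any matrix whose columns span $\mathcal K_n(\mathcal M,\mathcal R)$ (and $V_2^H G V_2$ is nonsingular); in case (b), $\mathcal V_n = \mathrm{diag}(S_n,\dots,S_n)$ ($l$ copies) with $S_n\in\mathbb{C}^{N\times n}$, $S_n^H S_n = I_n$, chosen so that $\mathcal K_n(\mathcal M,\mathcal R)\subseteq \mathrm{range}\,\mathcal V_n$. The projected pencil $s\mathcal E_n - \mathcal A_n$ is assumed regular and $s_0\mathcal E_n - \mathcal A_n$ nonsingular. *)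

(* Defs.v *)
From HB Require Import structures.
From mathcomp Require Import all_boot all_order all_algebra.
Set Implicit Arguments. Unset Strict Implicit. Unset Printing Implicit Defensive.
Import Order.TTheory GRing.Theory Num.Theory.
Local Open Scope ring_scope.

(* Complex scalars: an arbitrary numClosedFieldType C (e.g. the complex
   numbers); Num.conj is complex conjugation, `|x| the modulus. *)

Definition hadj (C : numClosedFieldType) m n (A : 'M[C]_(m, n)) : 'M[C]_(n, m) :=
  (map_mx Num.conj A)^T.

Definition is_hermitian (C : numClosedFieldType) n (A : 'M[C]_n) : Prop :=
  hadj A = A.

Definition transfer (C : numClosedFieldType) p q K
  (D : 'M[C]_(p, q)) (L : 'M[C]_(p, K)) (E A : 'M[C]_K) (B : 'M[C]_(K, q))
  (s : C) : 'M[C]_(p, q) :=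
  D + L *m invmx (s *: E - A) *m B.

Definition krylovM (C : numClosedFieldType) K (E A : 'M[C]_K) (s0 : C) : 'M[C]_K :=
  invmx (s0 *: E - A) *m E.
Definition krylovR (C : numClosedFieldType) K q (E A : 'M[C]_K) (B : 'M[C]_(K, q))
  (s0 : C) : 'M[C]_(K, q) :=
  invmx (s0 *: E - A) *m B.

Section Deflation.
Variables (C : numClosedFieldType) (K q : nat) (M : 'M[C]_K) (R : 'M[C]_(K, q)).

(* column i of the k-th block M^k R of the block-Krylov matrix, as a row vector
   (mxalgebra works with row spaces) *)
Definition kcol (k : nat) (i : 'I_q) : 'rV[C]_K := (col i (M ^+ k *m R))^T.

(* span of all columns preceding column (k,i) in [R, MR, M^2 R, ...]; it equals
   the span of the preceding columns that survive the deflation *)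
Definition kearlier (k : nat) (i : 'I_q) : 'M[C]_K :=
  ((\sum_(0 <= k' < k) <<(M ^+ k' *m R)^T>>) +
   (\sum_(i' < q | (i' < i)%N) <<kcol k i'>>))%MS.

(* column (k,i) is kept by the deflation iff it is linearly independent of the
   earlier columns *)
Definition kept (k : nat) (i : 'I_q) : bool := ~~ (kcol k i <= kearlier k i)%MS.

(* m_{k+1} = number of columns of the deflated block R^{(k+1)} *)
Definition mblk (k : nat) : nat := #|[pred i : 'I_q | kept k i]|.

(* j_max = index of the last nonempty block of the deflated block-Krylov matrix
   (all nonempty blocks have index <= K, the state dimension) *)
Definition jmax : nat := \max_(k < K | (0 < mblk k)%N) k.+1.

Definition nblk (j : nat) : nat := \sum_(0 <= k < j) mblk k.

(* K_{n(j)}(M,R) = range [R^{(1)}, M R^{(2)}, ..., M^{j-1} R^{(j)}]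
   (as a row space of row vectors) *)
Definition krylov (j : nat) : 'M[C]_K :=
  (\sum_(0 <= k < j) \sum_(i < q | kept k i) <<kcol k i>>)%MS.

End Deflation.

Definition padeO (C : numClosedFieldType) p q K Kn
  (D : 'M[C]_(p, q)) (L : 'M[C]_(p, K)) (E A : 'M[C]_K) (B : 'M[C]_(K, q))
  (Ln : 'M[C]_(p, Kn)) (En An : 'M[C]_Kn) (Bn : 'M[C]_(Kn, q))
  (s0 : C) (e : nat) : Prop :=
  exists (delta c : C), 0 < delta /\
    forall s : C, `|s - s0| < delta ->
      s *: E - A \in unitmx -> s *: En - An \in unitmx ->
      forall (a : 'I_p) (b : 'I_q),
        `|(transfer D Ln En An Bn s - transfer D L E A B s) a b|
          <= c * `|s - s0| ^+ e.

(* first = true : P_{-1} = F G F^H ; first = false : P_{-1} = F G^{-1} F^H *)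
Definition sso_A (C : numClosedFieldType) N N0 (first : bool)
  (P0 : 'M[C]_N) (F : 'M[C]_(N, N0)) (G : 'M[C]_N0) : 'M[C]_(N + N0) :=
  if first then block_mx (- P0) (- (F *m G)) (hadj (F *m G)) 0
  else block_mx (- P0) (- F) (hadj F) 0.

Definition sso_E (C : numClosedFieldType) N N0 (first : bool)
  (P1 : 'M[C]_N) (G : 'M[C]_N0) : 'M[C]_(N + N0) :=
  if first then block_mx P1 0 0 (hadj G) else block_mx P1 0 0 G.

Definition ho_E (C : numClosedFieldType) N l (P : nat -> 'M[C]_N) :=
  \mxdiag_(i < l) (if (i == l.-1 :> nat) then P l else 1%:M).

Definition ho_A (C : numClosedFieldType) N l (P : nat -> 'M[C]_N) :=
  - \mxblock_(i < l, j < l)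
      (if (i == l.-1 :> nat) then P j
       else if (j == i.+1 :> nat) then - 1%:M else (0 : 'M[C]_N)).

Definition ho_B (C : numClosedFieldType) N q l (B : 'M[C]_(N, q)) :=
  \mxcol_(i < l) (if (i == l.-1 :> nat) then B else 0).

Definition ho_L (C : numClosedFieldType) N q l (B : 'M[C]_(N, q)) :=
  \mxrow_(j < l) (if (j == 0 :> nat) then hadj B else 0).

(* Main.v *)
Require Import Defs.
From HB Require Import structures.
From mathcomp Require Import all_boot all_order all_algebra.
From mathcomp Require Import ring lra.
Import Order.TTheory GRing.Theory Num.Theory.
Local Open Scope ring_scope.

Module Aux.
Set Implicit Arguments. Unset Strict Implicit. Unset Printing Implicit Defensive.


Section Analytic.
Variable C : numClosedFieldType.

Definition pbnd (p : {poly C}) (s0 : C) : C :=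
  \sum_(i < size p) `|p`_i| * (`|s0| + 1) ^+ i.

Lemma pbnd_ge0 p s0 : 0 <= pbnd p s0.
Proof.
by apply: sumr_ge0 => i _; rewrite mulr_ge0 // exprn_ge0 // addr_ge0.
Qed.

Lemma pbndP p s0 s : `|s - s0| <= 1 -> `|p.[s]| <= pbnd p s0.
Proof.
move=> hs; rewrite horner_coef; apply: le_trans (ler_norm_sum _ _ _) _.
apply: ler_sum => i _; rewrite normrM normrX ler_wpM2l //.
apply: lerXn2r; rewrite ?nnegrE ?addr_ge0 //.
have -> : s = s0 + (s - s0) by rewrite addrC subrK.
by apply: le_trans (ler_normD _ _) _; rewrite lerD2l.
Qed.

Lemma poly_lip (p : {poly C}) (s0 : C) :
  exists c, 0 <= c /\ forall s, `|s - s0| <= 1 ->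
    `|p.[s] - p.[s0]| <= c * `|s - s0|.
Proof.
elim/poly_ind: p => [|p a [c [c0 hc]]].
  by exists 0; split => // s _; rewrite !horner0 subr0 normr0 mul0r.
exists (c * (`|s0| + 1) + `|p.[s0]|); split.
  by rewrite addr_ge0 // mulr_ge0 // addr_ge0.
move=> s hs; rewrite !hornerE.
have -> : p.[s] * s + a - (p.[s0] * s0 + a) =
   (p.[s] - p.[s0]) * s + p.[s0] * (s - s0) by ring.
apply: le_trans (ler_normD _ _) _; rewrite !normrM mulrDl lerD //.
  have hs' : `|s| <= `|s0| + 1.
    have -> : s = s0 + (s - s0) by rewrite addrC subrK.
    by apply: le_trans (ler_normD _ _) _; rewrite lerD2l.
  have := hc s hs => h1.
  apply: le_trans (_ : c * `|s - s0| * (`|s0| + 1) <= _).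
    by apply: ler_pM => //; rewrite mulr_ge0.
  by rewrite mulrAC.
Qed.

Lemma entry_le_sum m n (f : 'I_m -> 'I_n -> C) a b :
  (forall a b, 0 <= f a b) -> f a b <= \sum_a' \sum_b' f a' b'.
Proof.
move=> h; rewrite (bigD1 a) //= (bigD1 b) //= -addrA lerDl.
by rewrite addr_ge0 // !sumr_ge0 // => *; rewrite sumr_ge0.
Qed.

Lemma pencil_inv (k : nat) (E A : 'M[C]_k) (s0 : C) : s0 *: E - A \in unitmx ->
  exists d, 0 < d /\ exists c, 0 <= c /\ forall s, `|s - s0| < d ->
   s *: E - A \in unitmx /\ forall a b, `|invmx (s *: E - A) a b| <= c.
Proof.
move=> hu.
pose PK : 'M[{poly C}]_k := \matrix_(a, b) ('X * (E a b)%:P - (A a b)%:P).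
have hK s : map_mx (horner_eval s) PK = s *: E - A.
  by apply/matrixP => a b; rewrite !mxE /horner_eval !hornerE.
have hdet s : \det (s *: E - A) = (\det PK).[s].
  by rewrite -hK det_map_mx.
have hadjE s a b : \adj (s *: E - A) a b = (\adj PK a b).[s].
  by rewrite -hK -map_mx_adj mxE.
set d0 := (\det PK).[s0].
have d0n : d0 != 0 by rewrite /d0 -hdet -unitfE -unitmxE.
have nd0 : 0 < `|d0| by rewrite normr_gt0.
have [c1 [c10 hc1]] := poly_lip (\det PK) s0.
pose x := `|d0| / (2 * (c1 + 1)).
have c11 : 0 < c1 + 1 by rewrite ltr_wpDl.
have xpos : 0 < x by rewrite divr_gt0 // mulr_gt0.
have x1pos : 0 < 1 + x by rewrite addr_gt0.
pose d := x / (1 + x).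
have dpos : 0 < d by rewrite divr_gt0.
have dle1 : d <= 1 by rewrite ler_pdivrMr // mul1r lerDr ltW.
have dlex : d <= x by rewrite ler_pdivrMr // ler_peMr // ?lerDl // ltW.
exists d; split => //.
pose S := \sum_a \sum_b pbnd (\adj PK a b) s0.
have S0 : 0 <= S by rewrite !sumr_ge0 // => *; rewrite sumr_ge0 // => *; exact: pbnd_ge0.
exists (S * (2 / `|d0|)); split; first by rewrite mulr_ge0 // divr_ge0.
move=> s hs.
have hs1 : `|s - s0| <= 1 by apply: ltW; apply: lt_le_trans hs _.
have hs2 : `|s - s0| < `|d0| / (2 * (c1 + 1)).
  by apply: lt_le_trans hs _.
have hdiff : `|(\det PK).[s] - d0| < `|d0| / 2.
  apply: le_lt_trans (hc1 s hs1) _.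
  apply: le_lt_trans (_ : (c1 + 1) * `|s - s0| < _).
    by rewrite ler_wpM2r // lerDl.
  by rewrite -ltr_pdivlMl // mulrC -mulrA -invfM.
have hdlow : `|d0| / 2 < `|(\det PK).[s]|.
  have := ler_dist_dist ((\det PK).[s]) d0.
  move=> h.
  have h2 : `|d0| - `|(\det PK).[s]| <= `|(\det PK).[s] - d0|.
    apply: le_trans h; rewrite distrC; apply: real_ler_norm.
    by rewrite rpredB // normr_real.
  have : `|d0| - `|(\det PK).[s]| < `|d0| / 2 := le_lt_trans h2 hdiff.
  rewrite ltrBlDr -ltrBlDl.
  suff -> : `|d0| - `|d0| / 2 = `|d0| / 2 by [].
  by rewrite {1}(splitr `|d0|) addrK.
have dpos2 : 0 < `|(\det PK).[s]| by apply: lt_trans hdlow; rewrite divr_gt0.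
have hu' : s *: E - A \in unitmx by rewrite unitmxE unitfE hdet -normr_gt0.
split => // a b; rewrite /invmx hu' mxE hdet hadjE.
rewrite normrM normfV.
have hA : `|(\adj PK a b).[s]| <= S.
  apply: le_trans (pbndP _ hs1) _.
  by apply: (@entry_le_sum _ _ (fun x y => pbnd (\adj PK x y) s0) a b) => *; exact: pbnd_ge0.
rewrite mulrC; apply: ler_pM => //; first by rewrite invr_ge0 ltW.
have -> : 2 / `|d0| = (`|d0| / 2)^-1 by rewrite invf_div.
by rewrite lef_pV2 ?posrE ?divr_gt0 // ltW.
Qed.

Lemma mind (d1 d2 : C) : 0 < d1 -> 0 < d2 -> exists d, [/\ 0 < d, d <= d1 & d <= d2].
Proof.
move=> h1 h2; exists (d1 * d2 / (d1 + d2)).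
have h12 : 0 < d1 + d2 by rewrite addr_gt0.
split; first by rewrite divr_gt0 // mulr_gt0.
  by rewrite ler_pdivrMr // ler_pM2l // lerDr ltW.
by rewrite ler_pdivrMr // mulrC ler_pM2l // lerDl ltW.
Qed.

Definition lbnd m n (f : C -> 'M[C]_(m, n)) (s0 : C) :=
  exists d, 0 < d /\ exists c, 0 <= c /\
    forall s, `|s - s0| < d -> forall a b, `|f s a b| <= c.

Lemma lbnd_const m n (A : 'M[C]_(m, n)) s0 : lbnd (fun _ => A) s0.
Proof.
exists 1; split => //; exists (\sum_a \sum_b `|A a b|); split.
  by rewrite sumr_ge0 // => *; rewrite sumr_ge0.
by move=> s _ a b; apply: (@entry_le_sum _ _ (fun x y => `|A x y|)).
Qed.

Lemma lbnd_ext m n (f g : C -> 'M[C]_(m, n)) s0 :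
  (forall s, f s = g s) -> lbnd f s0 -> lbnd g s0.
Proof. by move=> e [d [d0 [c [c0 h]]]]; exists d; split => //; exists c; split => // s hs a b; rewrite -e h. Qed.

Lemma lbnd_add m n (f g : C -> 'M[C]_(m, n)) s0 :
  lbnd f s0 -> lbnd g s0 -> lbnd (fun s => f s + g s) s0.
Proof.
move=> [d1 [d10 [c1 [c10 h1]]]] [d2 [d20 [c2 [c20 h2]]]].
have [d [d0 hd1 hd2]] := mind d10 d20.
exists d; split => //; exists (c1 + c2); split; first by rewrite addr_ge0.
move=> s hs a b; rewrite mxE; apply: le_trans (ler_normD _ _) _.
by rewrite lerD // ?h1 ?h2 //; apply: lt_le_trans hs _.
Qed.

Lemma lbnd_opp m n (f : C -> 'M[C]_(m, n)) s0 :
  lbnd f s0 -> lbnd (fun s => - f s) s0.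
Proof.
move=> [d [d0 [c [c0 h]]]]; exists d; split => //; exists c; split => // s hs a b.
by rewrite mxE normrN h.
Qed.

Lemma lbnd_mul m n p (f : C -> 'M[C]_(m, n)) (g : C -> 'M[C]_(n, p)) s0 :
  lbnd f s0 -> lbnd g s0 -> lbnd (fun s => f s *m g s) s0.
Proof.
move=> [d1 [d10 [c1 [c10 h1]]]] [d2 [d20 [c2 [c20 h2]]]].
have [d [d0 hd1 hd2]] := mind d10 d20.
exists d; split => //; exists (\sum_(k < n) (c1 * c2)); split.
  by rewrite sumr_ge0 // => *; rewrite mulr_ge0.
move=> s hs a b; rewrite mxE; apply: le_trans (ler_norm_sum _ _ _) _.
apply: ler_sum => k _; rewrite normrM ler_pM //.
  by rewrite h1 //; apply: lt_le_trans hs _.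
by rewrite h2 //; apply: lt_le_trans hs _.
Qed.

Lemma lbnd_sig m n (f : C -> 'M[C]_(m, n)) s0 :
  lbnd f s0 -> lbnd (fun s => (s - s0) *: f s) s0.
Proof.
move=> [d1 [d10 [c1 [c10 h1]]]].
have [d [d0 hd1 hd2]] := mind d10 ltr01.
exists d; split => //; exists c1; split => // s hs a b.
rewrite mxE normrM -[c1]mul1r ler_pM //.
  by apply: ltW; apply: lt_le_trans hs _.
by rewrite h1 //; apply: lt_le_trans hs _.
Qed.

Lemma lbnd_pencil k (E A : 'M[C]_k) s0 : lbnd (fun s => s *: E - A) s0.
Proof.
apply: (@lbnd_ext _ _ (fun s => (s0 *: E - A) + (s - s0) *: E)).
  by move=> s; rewrite scalerBl addrC addrA subrK.
exact: lbnd_add (lbnd_const _ _) (lbnd_sig (lbnd_const _ _)).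
Qed.

Lemma lbnd_inv k (E A : 'M[C]_k) s0 : s0 *: E - A \in unitmx ->
  lbnd (fun s => invmx (s *: E - A)) s0.
Proof.
move=> /pencil_inv [d [d0 [c [c0 h]]]]; exists d; split => //; exists c; split => //.
by move=> s hs; case: (h s hs).
Qed.

Lemma lbnd_hadj_conj m n (f : C -> 'M[C]_(m, n)) s0 : s0 \is Num.real ->
  lbnd f s0 -> lbnd (fun s => hadj (f (Num.conj s))) s0.
Proof.
move=> hr [d [d0 [c [c0 h]]]]; exists d; split => //; exists c; split => // s hs a b.
rewrite /hadj !mxE norm_conjC h //.
by rewrite -(conj_Creal hr) -rmorphB norm_conjC.
Qed.

Lemma padeO_of p q K Kn (D : 'M[C]_(p, q)) (L : 'M[C]_(p, K)) (E A : 'M[C]_K)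
  (B : 'M[C]_(K, q)) (Ln : 'M[C]_(p, Kn)) (En An : 'M[C]_Kn) (Bn : 'M[C]_(Kn, q))
  (s0 : C) (e : nat) (F : C -> 'M[C]_(p, q)) :
  lbnd F s0 ->
  (exists d, 0 < d /\ forall s, `|s - s0| < d ->
      s *: E - A \in unitmx -> s *: En - An \in unitmx ->
      transfer D Ln En An Bn s - transfer D L E A B s = (s - s0) ^+ e *: F s) ->
  padeO D L E A B Ln En An Bn s0 e.
Proof.
move=> [d1 [d10 [c [c0 h1]]]] [d2 [d20 h2]].
have [d [d0 hd1 hd2]] := mind d10 d20.
exists d, c; split => // s hs u1 u2 a b.
rewrite h2 //; last by apply: lt_le_trans hs _.
rewrite mxE normrM normrX mulrC ler_wpM2r ?exprn_ge0 //.
by rewrite h1 //; apply: lt_le_trans hs _.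
Qed.

End Analytic.


Section Alg.
Variable C : numClosedFieldType.

Lemma hadjM m n p (A : 'M[C]_(m, n)) (B : 'M[C]_(n, p)) :
  hadj (A *m B) = hadj B *m hadj A.
Proof. by rewrite /hadj map_mxM trmx_mul. Qed.
Lemma hadjD m n (A B : 'M[C]_(m, n)) : hadj (A + B) = hadj A + hadj B.
Proof. by rewrite /hadj map_mxD linearD. Qed.
Lemma hadjN m n (A : 'M[C]_(m, n)) : hadj (- A) = - hadj A.
Proof. by rewrite /hadj map_mxN linearN. Qed.
Lemma hadjB m n (A B : 'M[C]_(m, n)) : hadj (A - B) = hadj A - hadj B.
Proof. by rewrite hadjD hadjN. Qed.
Lemma hadjZ m n a (A : 'M[C]_(m, n)) : hadj (a *: A) = Num.conj a *: hadj A.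
Proof. by apply/matrixP => i j; rewrite !mxE rmorphM. Qed.
Lemma hadjK m n (A : 'M[C]_(m, n)) : hadj (hadj A) = A.
Proof. by apply/matrixP => i j; rewrite !mxE conjCK. Qed.
Lemma hadj0 m n : hadj (0 : 'M[C]_(m, n)) = 0.
Proof. by apply/matrixP => i j; rewrite !mxE rmorph0. Qed.
Lemma hadj1 n : hadj (1%:M : 'M[C]_n) = 1%:M.
Proof. by apply/matrixP => i j; rewrite !mxE eq_sym rmorphMn rmorph1. Qed.
Lemma hadj_block m1 m2 n1 n2 (a : 'M[C]_(m1, n1)) (b : 'M[C]_(m1, n2))
  (c : 'M[C]_(m2, n1)) (d : 'M[C]_(m2, n2)) :
  hadj (block_mx a b c d) = block_mx (hadj a) (hadj c) (hadj b) (hadj d).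
Proof. by rewrite /hadj map_block_mx tr_block_mx. Qed.
Lemma hadj_row m n1 n2 (a : 'M[C]_(m, n1)) (b : 'M[C]_(m, n2)) :
  hadj (row_mx a b) = col_mx (hadj a) (hadj b).
Proof. by rewrite /hadj map_row_mx tr_row_mx. Qed.
Lemma hadj_col m1 m2 n (a : 'M[C]_(m1, n)) (b : 'M[C]_(m2, n)) :
  hadj (col_mx a b) = row_mx (hadj a) (hadj b).
Proof. by rewrite /hadj map_col_mx tr_col_mx. Qed.

Lemma expand k q (E A : 'M[C]_k) (Bc : 'M[C]_(k, q)) (s0 s : C) (j : nat) :
  s0 *: E - A \in unitmx -> s *: E - A \in unitmx ->
  let T := s0 *: E - A in let K := s *: E - A in
  let M := krylovM E A s0 in let R := krylovR E A Bc s0 in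
  invmx K *m Bc = \sum_(i < j) ((- (s - s0)) ^+ i *: (M ^+ i *m R))
     + (- (s - s0)) ^+ j *: (invmx K *m T *m (M ^+ j *m R)).
Proof.
move=> hT hK T K M R.
elim: j => [|j IH].
  by rewrite big_ord0 add0r expr0 scale1r expr0 -idmxE mul1mx /R /krylovR /T -mulmxA mulKVmx.
rewrite IH big_ord_recr /= -addrA; congr (_ + _); set X := M ^+ j *m R.
have h1 : invmx K *m T *m X = X - (s - s0) *: (invmx K *m T *m (M *m X)).
  have hE : T *m M = E by rewrite /M /krylovM mulmxA mulmxV // mul1mx.
  have hTK : T = K + (s0 - s) *: E by apply/matrixP => a b; rewrite !mxE; ring.
  rewrite {1}hTK mulmxDr mulVmx // mulmxDl mul1mx -{1}hE -scalemxAr.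
  by rewrite -scalemxAl -scaleNr opprB !mulmxA.
rewrite h1 scalerDr; congr (_ + _).
have -> : M *m X = M ^+ j.+1 *m R by rewrite exprS /X mulmxA.
by rewrite -scaleNr scalerA -exprSr.
Qed.

Section Defl.
Variables (K q : nat) (M : 'M[C]_K) (R : 'M[C]_(K, q)).

Lemma krylov_mono j1 j2 : (j1 <= j2)%N -> (krylov M R j1 <= krylov M R j2)%MS.
Proof.
move=> h; rewrite /krylov (@big_cat_nat _ _ _ j1 0 j2) /=.
  exact: addsmxSl.
all: done.
Qed.

Lemma kcol_kept k i : kept M R k i -> (kcol M R k i <= krylov M R k.+1)%MS.
Proof.
move=> hk; rewrite /krylov big_nat_recr //=.
apply: submx_trans (addsmxSr _ _).
by apply: (sumsmx_sup i) => //; rewrite genmxE.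
Qed.

Lemma kcol_in k i : (kcol M R k i <= krylov M R k.+1)%MS.
Proof.
elim/ltn_ind: k i => k IHk.
have hblk : forall k', (k' < k)%N -> ((M ^+ k' *m R)^T <= krylov M R k)%MS.
  move=> k' hk'; apply/row_subP => i'.
  rewrite -tr_col; apply: submx_trans (IHk k' hk' i') _.
  exact: krylov_mono.
suff : forall n (i : 'I_q), nat_of_ord i = n -> (kcol M R k i <= krylov M R k.+1)%MS.
  by move=> h i; exact: h.
elim/ltn_ind => n IHn i hi.
case hk: (kept M R k i); first exact: kcol_kept.
move/negbFE: hk => hk; apply: submx_trans hk _.
rewrite /kearlier addsmx_sub; apply/andP; split.
  rewrite big_mkord; apply/sumsmx_subP => k' _.
  rewrite genmxE; apply: submx_trans (hblk k' (ltn_ord k')) _.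
  exact: krylov_mono.
apply/sumsmx_subP => i' hi'; rewrite genmxE.
by apply: (IHn i') => //; rewrite -hi.
Qed.

Lemma blk_in k j : (k < j)%N -> ((M ^+ k *m R)^T <= krylov M R j)%MS.
Proof.
move=> hk; apply/row_subP => i'.
rewrite -tr_col; apply: submx_trans (kcol_in k i') _.
exact: krylov_mono.
Qed.

End Defl.
End Alg.


Section Core.
Variable C : numClosedFieldType.

Lemma hadj_unit n (A : 'M[C]_n) : (hadj A \in unitmx) = (A \in unitmx).
Proof. by rewrite /hadj unitmx_tr map_unitmx. Qed.

Lemma krylov_sum k m q (E A : 'M[C]_k) (Bc : 'M[C]_(k, q)) (Vn : 'M[C]_(k, m)) s0 j :
  (forall i, (i < j)%N -> exists Dm : 'M_(m, q),
      krylovM E A s0 ^+ i *m krylovR E A Bc s0 = Vn *m Dm) ->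
  forall c : nat -> C, exists w,
    \sum_(i < j) c i *: (krylovM E A s0 ^+ i *m krylovR E A Bc s0) = Vn *m w.
Proof.
move=> h c; elim: j h => [|j IH] h.
  by exists 0; rewrite big_ord0 mulmx0.
have [w hw] := IH (fun i hi => h i (ltnW hi)).
have [Dm hD] := h j (ltnSn j).
exists (w + c j *: Dm); rewrite big_ord_recr /= hw hD mulmxDr.
by rewrite scalemxAr.
Qed.

Lemma pencil_proj k m (E A : 'M[C]_k) (Vn : 'M[C]_(k, m)) s :
  s *: (hadj Vn *m E *m Vn) - hadj Vn *m A *m Vn = hadj Vn *m (s *: E - A) *m Vn.
Proof. by rewrite mulmxBr mulmxBl -!scalemxAr -scalemxAl. Qed.

Lemma conj_sig (s0 s : C) : s0 \is Num.real ->
  Num.conj (Num.conj s - s0) = s - s0.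
Proof. by move=> hr; rewrite rmorphB /= conjCK conj_Creal. Qed.

Lemma core_a k m q (E A : 'M[C]_k) (Bc : 'M[C]_(k, q)) (Lc : 'M[C]_(q, k))
  (D : 'M[C]_q) (Vn : 'M[C]_(k, m)) (J : 'M[C]_k) (J' : 'M[C]_m) (s0 : C) (j : nat) :
  s0 \is Num.real -> s0 *: E - A \in unitmx ->
  (forall s, J *m (s *: E - A) = hadj (Num.conj s *: E - A) *m J) ->
  J *m J = 1%:M -> hadj J = J ->
  hadj Bc *m J = Lc ->
  J *m Vn = Vn *m J' ->
  (forall i, (i < j)%N -> exists Dm : 'M_(m, q),
      krylovM E A s0 ^+ i *m krylovR E A Bc s0 = Vn *m Dm) ->
  let En := hadj Vn *m E *m Vn in let An := hadj Vn *m A *m Vn in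
  s0 *: En - An \in unitmx ->
  padeO D Lc E A Bc (Lc *m Vn) En An (hadj Vn *m Bc) s0 (2 * j).
Proof.
move=> hr hT hsym hJJ hJh hLc hJV hkry En An hTn.
set T := s0 *: E - A.
set MR := krylovM E A s0 ^+ j *m krylovR E A Bc s0.
pose Z s := invmx (s *: E - A) *m T *m MR.
pose Q s := Vn *m invmx (s *: En - An) *m hadj Vn.
pose K s := s *: E - A.
pose F s := hadj (Z (Num.conj s)) *m J *m (K s *m Q s *m K s - K s) *m Z s.
apply: (padeO_of (F := F)).
  have hZ : lbnd Z s0.
    apply: lbnd_mul _ (lbnd_const _ _); apply: lbnd_mul _ (lbnd_const _ _).
    exact: lbnd_inv.
  have hK : lbnd K s0 by exact: lbnd_pencil.
  have hQ : lbnd Q s0.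
    apply: lbnd_mul _ (lbnd_const _ _); apply: lbnd_mul (lbnd_const _ _) _.
    exact: lbnd_inv.
  have h1 := lbnd_mul (lbnd_hadj_conj hr hZ) (lbnd_const J s0).
  have h2 := lbnd_add (lbnd_mul (lbnd_mul hK hQ) hK) (lbnd_opp hK).
  exact: lbnd_mul (lbnd_mul h1 h2) hZ.
exists 1; split => // s _ hKs hKns.
set sb := Num.conj s.
have hKb : hadj (sb *: E - A) = J *m K s *m J.
  by rewrite hsym -mulmxA hJJ mulmx1.
have hKbu : sb *: E - A \in unitmx.
  by rewrite -hadj_unit hKb !unitmx_mul hKs andbT; case: (mulmx1_unit hJJ) => ->.
set X := invmx (K s) *m Bc.
set Xb := invmx (sb *: E - A) *m Bc.
set y := hadj Xb *m J.
have hy : y *m K s = Lc.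
  by rewrite /y -mulmxA /K hsym mulmxA -hadjM /Xb mulKVmx // hLc.
have hBc : Bc = K s *m X by rewrite /X mulKVmx.
have hKn : s *: En - An = hadj Vn *m K s *m Vn by rewrite pencil_proj.
have hQV : (K s *m Q s *m K s - K s) *m Vn = 0.
  rewrite mulmxBl /Q -!mulmxA [hadj Vn *m (K s *m Vn)]mulmxA -hKn mulVmx //.
  by rewrite mulmx1 subrr.
have hVQ : hadj Vn *m (K s *m Q s *m K s - K s) = 0.
  rewrite mulmxBr /Q !mulmxA -hKn mulmxV // mul1mx subrr.
  done.
have hdiff : transfer D (Lc *m Vn) En An (hadj Vn *m Bc) s - transfer D Lc E A Bc s
    = y *m (K s *m Q s *m K s - K s) *m X.
  rewrite /transfer /Q opprD addrACA subrr add0r.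
  rewrite mulmxBr mulmxBl !mulmxA hy -!mulmxA -hBc /X.
  by rewrite -?mulmxA.
rewrite hdiff.
have [w hw] := krylov_sum hkry (fun i => (- (s - s0)) ^+ i).
have [wb hwb] := krylov_sum hkry (fun i => (- (sb - s0)) ^+ i).
have hX : X = Vn *m w + (- (s - s0)) ^+ j *: Z s.
  by rewrite /X /K (@expand C k q E A Bc s0 s j hT hKs) hw.
have hXb : Xb = Vn *m wb + (- (sb - s0)) ^+ j *: Z sb.
  by rewrite /Xb (@expand C k q E A Bc s0 sb j hT hKbu) hwb.
have hVJ : hadj Vn *m J = hadj J' *m hadj Vn.
  by rewrite -hJh -hadjM hJV hadjM.
have hy' : y = (hadj wb *m hadj J') *m hadj Vn
    + (- (s - s0)) ^+ j *: (hadj (Z sb) *m J).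
  rewrite /y hXb hadjD mulmxDl hadjM -mulmxA hVJ mulmxA; congr (_ + _).
  rewrite hadjZ -scalemxAl; congr (_ *: _).
  by rewrite rmorphXn rmorphN /= conj_sig.
set G := K s *m Q s *m K s - K s.
rewrite hy' hX mulmxDl -(mulmxA _ (hadj Vn)) hVQ mulmx0 add0r.
have hQV' : G *m Vn = 0 := hQV.
rewrite mulmxDr (mulmxA _ Vn w) -(mulmxA _ G Vn) hQV' mulmx0 mul0mx add0r.
rewrite -!scalemxAl -scalemxAr scalerA -exprMn mulrNN -expr2 -exprM.
by [].
Qed.

End Core.


Section CaseA.
Variable C : numClosedFieldType.

Lemma sym_blk N N0 (P0 P1 : 'M[C]_N) (X : 'M[C]_(N, N0)) (G2 : 'M[C]_N0) (s : C) :
  hadj P0 = P0 -> hadj P1 = P1 -> hadj G2 = G2 ->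
  (block_mx 1%:M 0 0 (- 1%:M)) *m (s *: block_mx P1 0 0 G2 - block_mx (- P0) (- X) (hadj X) 0)
  = hadj (Num.conj s *: block_mx P1 0 0 G2 - block_mx (- P0) (- X) (hadj X) 0)
     *m (block_mx 1%:M 0 0 (- 1%:M)).
Proof.
move=> h0 h1 h2.
rewrite !scale_block_mx !opp_block_mx !add_block_mx hadj_block !mulmx_block.
rewrite !hadjD !hadjN !hadjZ !hadjK h0 h1 h2 !hadj0 !conjCK.
rewrite !mul1mx !mul0mx !mulmx1 !mulmx0 !mulNmx !mulmxN !mul1mx !mulmx1.
by rewrite !scaler0 !oppr0 !addr0 !add0r !opprK.
Qed.

Lemma Jsq m1 m2 : (block_mx 1%:M 0 0 (- 1%:M) : 'M[C]_(m1 + m2)) *m block_mx 1%:M 0 0 (- 1%:M) = 1%:M.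
Proof.
rewrite mulmx_block !mulmx1 !mulmx0 !mul0mx !mulmxN !mulmx1 opprK !addr0 !add0r ?oppr0.
by rewrite -scalar_mx_block.
Qed.

Lemma Jherm m1 m2 : hadj (block_mx 1%:M 0 0 (- 1%:M) : 'M[C]_(m1 + m2)) = block_mx 1%:M 0 0 (- 1%:M).
Proof. by rewrite hadj_block !hadj0 hadjN !hadj1. Qed.

Lemma case_a : (forall (N N0 q : nat) (first : bool)
     (P0 P1 : 'M[C]_N) (F : 'M[C]_(N, N0)) (G : 'M[C]_N0)
     (B : 'M[C]_(N, q)) (D : 'M[C]_q) (s0 : C) (j n : nat)
     (V : 'M[C]_(N + N0, n)),
   is_hermitian P0 -> is_hermitian P1 -> is_hermitian G ->
   (~~ first -> G \in unitmx) ->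
   let E := sso_E first P1 G in
   let A := sso_A first P0 F G in
   let Bc : 'M[C]_(N + N0, q) := col_mx B 0 in
   let Lc : 'M[C]_(q, N + N0) := row_mx (hadj B) 0 in
   s0 \is Num.real ->
   s0 *: E - A \in unitmx ->
   let M := krylovM E A s0 in
   let R := krylovR E A Bc s0 in
   (1 <= j <= jmax M R)%N ->
   n = nblk M R j ->
   (V^T == krylov M R j)%MS ->
   hadj (dsubmx V) *m G *m dsubmx V \in unitmx ->
   let Vn : 'M[C]_(N + N0, n + n) := block_mx (usubmx V) 0 0 (dsubmx V) in
   let En := hadj Vn *m E *m Vn in
   let An := hadj Vn *m A *m Vn in
   s0 *: En - An \in unitmx ->
   padeO D Lc E A Bc (Lc *m Vn) En An (hadj Vn *m Bc) s0 (2 * j)).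
Proof.
move=> N N0 q first P0 P1 F G B D s0 j n V h0 h1 hG _ E A Bc Lc hr hT M R _ _ hV _ Vn En An hTn.
apply: (@core_a C _ _ _ E A Bc Lc D Vn (block_mx 1%:M 0 0 (- 1%:M)) (block_mx 1%:M 0 0 (- 1%:M))).
- exact: hr.
- exact: hT.
- move=> s; rewrite /E /A /sso_E /sso_A; case: ifP => _.
    by apply: sym_blk => //; rewrite hadjK.
  exact: sym_blk.
- exact: Jsq.
- exact: Jherm.
- rewrite /Bc /Lc hadj_col hadj0 mul_row_block !mulmx0 !mulmx1 mulmxN mulmx1 ?oppr0.
  by rewrite !addr0.
- rewrite /Vn !mulmx_block !mulmx0 !mul0mx !mulmx1 !mul1mx !mulmxN !mulNmx !mulmx1 !mul1mx.
  by rewrite !addr0 !add0r ?oppr0.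
- move=> i hi.
  have hs : ((M ^+ i *m R)^T <= V^T)%MS.
    apply: submx_trans (blk_in M R hi) _.
    by case/andP: hV.
  have [D' hD'] := submxP hs.
  exists (col_mx 1%:M 1%:M *m D'^T).
  have -> : M ^+ i *m R = V *m D'^T by rewrite -[LHS]trmxK hD' trmx_mul trmxK.
  rewrite mulmxA /Vn mul_block_col !mulmx1 ?mul0mx ?addr0 ?add0r.
  by rewrite vsubmxK.
- exact: hTn.
Qed.

End CaseA.


Section CaseB.
Variable C : numClosedFieldType.
Variables (N l : nat).
Hypothesis hl : (0 < l)%N.

Definition cmp p r (W : 'M[C]_(\sum_(i < l) p, r)) (i : 'I_l) : 'M[C]_(p, r) :=
  @submxcol C l (fun _ => p) r W i.

Lemma cmpD p r (W1 W2 : 'M[C]_(\sum_(i < l) p, r)) i : cmp (W1 + W2) i = cmp W1 i + cmp W2 i.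
Proof. by apply/matrixP => a b; rewrite !mxE. Qed.
Lemma cmpN p r (W : 'M[C]_(\sum_(i < l) p, r)) i : cmp (- W) i = - cmp W i.
Proof. by apply/matrixP => a b; rewrite !mxE. Qed.
Lemma cmpB p r (W1 W2 : 'M[C]_(\sum_(i < l) p, r)) i : cmp (W1 - W2) i = cmp W1 i - cmp W2 i.
Proof. by rewrite cmpD cmpN. Qed.
Lemma cmpZ p r a (W : 'M[C]_(\sum_(i < l) p, r)) i : cmp (a *: W) i = a *: cmp W i.
Proof. by apply/matrixP => a' b; rewrite !mxE. Qed.
Lemma cmpM p r r' (W : 'M[C]_(\sum_(i < l) p, r)) (U : 'M[C]_(r, r')) i :
  cmp (W *m U) i = cmp W i *m U.
Proof. by rewrite /cmp submxcol_mul. Qed.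
Lemma cmpE p r (W : 'M[C]_(\sum_(i < l) p, r)) : W = \mxcol_i cmp W i.
Proof. by rewrite /cmp submxcolK. Qed.
Lemma cmp_sel p r (W : 'M[C]_(\sum_(i < l) p, r)) i : cmp W i = cmp 1%:M i *m W.
Proof. by rewrite -cmpM mul1mx. Qed.

Definition i0 : 'I_l := Ordinal hl.
Lemma lastlt : (l.-1 < l)%N. Proof. by rewrite prednK. Qed.
Definition ilast : 'I_l := Ordinal lastlt.


Lemma cmpK_gen (P : nat -> 'M[C]_N) s r (W : 'M[C]_(\sum_(i < l) N, r)) i :
  cmp ((s *: ho_E l P - ho_A l P) *m W) i =
  s *: ((if (i == l.-1 :> nat) then P l else 1%:M) *m cmp W i) +
  \sum_(k < l) ((if (i == l.-1 :> nat) then P k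
        else if (k == i.+1 :> nat) then - 1%:M else (0 : 'M[C]_N)) *m cmp W k).
Proof.
have -> : (s *: ho_E l P - ho_A l P) *m W = (s *: ho_E l P - ho_A l P) *m \mxcol_i cmp W i.
  by rewrite -cmpE.
rewrite mulmxBl -scalemxAl /ho_E mul_mxdiag_mxcol /ho_A mulNmx mul_mxblock_mxrow.
by rewrite cmpB cmpZ cmpN opprK /cmp !mxcolK.
Qed.

Lemma cmpK_mid (P : nat -> 'M[C]_N) s r (W : 'M[C]_(\sum_(i < l) N, r)) (i k : 'I_l) :
  k = i.+1 :> nat ->
  cmp ((s *: ho_E l P - ho_A l P) *m W) i = s *: cmp W i - cmp W k.
Proof.
move=> hk; rewrite cmpK_gen.
have hi : (i == l.-1 :> nat) = false.
  apply/negbTE; apply/eqP => e; have := ltn_ord k; rewrite hk e prednK //.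
  by rewrite ltnn.
rewrite hi mul1mx (bigD1 k) //= hk eqxx mulNmx mul1mx big1 ?addr0 //.
move=> k' hk'; case: eqP => e; last by rewrite mul0mx.
by move: hk'; rewrite -(inj_eq val_inj) /= e -hk eqxx.
Qed.

Lemma cmpK_last (P : nat -> 'M[C]_N) s r (W : 'M[C]_(\sum_(i < l) N, r)) :
  cmp ((s *: ho_E l P - ho_A l P) *m W) ilast =
  s *: (P l *m cmp W ilast) + \sum_(k < l) (P k *m cmp W k).
Proof. by rewrite cmpK_gen /= eqxx. Qed.


Definition Vdiag n (S : 'M[C]_(N, n)) : 'M[C]_(\sum_(i < l) N, \sum_(k < l) n) :=
  \mxblock_(i < l, k < l) (if i == k then S else 0).

Lemma cmpV n (S : 'M[C]_(N, n)) r (W : 'M[C]_(\sum_(k < l) n, r)) i :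
  cmp (Vdiag S *m W) i = S *m cmp W i.
Proof.
rewrite {1}(cmpE W) /Vdiag mul_mxblock_mxrow /cmp mxcolK.
rewrite (bigD1 i) //= eqxx big1 ?addr0 // => k /negbTE hk.
by rewrite eq_sym hk mul0mx.
Qed.

Lemma hadj_Vdiag n (S : 'M[C]_(N, n)) :
  hadj (Vdiag S) = \mxblock_(i < l, k < l) (if i == k then hadj S else 0).
Proof.
apply/matrixP => a b; rewrite /hadj /Vdiag !mxE eq_sym.
by case: eqP => _; rewrite ?mxE ?rmorph0.
Qed.

Lemma cmpVh n (S : 'M[C]_(N, n)) r (W : 'M[C]_(\sum_(k < l) N, r)) i :
  cmp (hadj (Vdiag S) *m W) i = hadj S *m cmp W i.
Proof.
rewrite hadj_Vdiag {1}(cmpE W) mul_mxblock_mxrow /cmp mxcolK.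
rewrite (bigD1 i) //= eqxx big1 ?addr0 // => k /negbTE hk.
by rewrite eq_sym hk mul0mx.
Qed.

Lemma cmpBc q (B : 'M[C]_(N, q)) i :
  cmp (ho_B l B) i = if (i == l.-1 :> nat) then B else 0.
Proof. by rewrite /cmp /ho_B mxcolK. Qed.

Lemma LcE q (B : 'M[C]_(N, q)) r (W : 'M[C]_(\sum_(k < l) N, r)) :
  ho_L l B *m W = hadj B *m cmp W i0.
Proof.
rewrite {1}(cmpE W) /ho_L mul_mxrow_mxcol (bigD1 i0) //= big1 ?addr0 //.
move=> k hk; case: eqP => e; last by rewrite mul0mx.
by move: hk; rewrite -(inj_eq val_inj) /= e eqxx.
Qed.


Definition Ps (P : nat -> 'M[C]_N) (s : C) : 'M[C]_N := \sum_(i < l.+1) s ^+ i *: P i.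

Lemma geom p r (Z : 'M[C]_(\sum_(i < l) p, r)) s :
  (forall i k : 'I_l, k = i.+1 :> nat -> s *: cmp Z i - cmp Z k = 0) ->
  forall i : 'I_l, cmp Z i = s ^+ i *: cmp Z i0.
Proof.
move=> h.
suff : forall n (i : 'I_l), nat_of_ord i = n -> cmp Z i = s ^+ i *: cmp Z i0.
  by move=> H i; exact: H.
elim => [|n IH] i hi.
  have -> : i = i0 by apply: val_inj.
  by rewrite expr0 scale1r.
have hn : (n < l)%N by rewrite -ltnS -hi ltnS ltnW.
have e := h (Ordinal hn) i hi.
move/eqP: e; rewrite subr_eq0 => /eqP <-.
by rewrite (IH (Ordinal hn)) // scalerA hi exprS.
Qed.

Lemma lastrow (P : nat -> 'M[C]_N) s r (Z : 'M[C]_(\sum_(i < l) N, r)) :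
  (forall i, cmp Z i = s ^+ i *: cmp Z i0) ->
  cmp ((s *: ho_E l P - ho_A l P) *m Z) ilast = Ps P s *m cmp Z i0.
Proof.
move=> h; rewrite cmpK_last /Ps big_ord_recr /= mulmxDl addrC; congr (_ + _).
  rewrite mulmx_suml; apply: eq_bigr => k _.
  by rewrite h -scalemxAr scalemxAl.
rewrite h /= -scalemxAr scalerA -exprS prednK //.
by rewrite scalemxAl.
Qed.


Lemma mid_ne (i k : 'I_l) : k = i.+1 :> nat -> (i == l.-1 :> nat) = false.
Proof.
move=> hk; apply/negbTE; apply/eqP => e; have := ltn_ord k; rewrite hk e prednK //.
by rewrite ltnn.
Qed.

Lemma F1 (P : nat -> 'M[C]_N) q (B : 'M[C]_(N, q)) s (X : 'M[C]_(\sum_(i < l) N, q)) :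
  (s *: ho_E l P - ho_A l P) *m X = ho_B l B -> Ps P s *m cmp X i0 = B.
Proof.
move=> hX.
have hg : forall i, cmp X i = s ^+ i *: cmp X i0.
  apply: geom => i k hk.
  by rewrite -(cmpK_mid P s X hk) hX cmpBc (mid_ne hk).
by rewrite -(lastrow P hg) hX cmpBc /= eqxx.
Qed.

Lemma F2 (P : nat -> 'M[C]_N) q n (B : 'M[C]_(N, q)) (S : 'M[C]_(N, n)) s
  (Xn : 'M[C]_(\sum_(i < l) n, q)) :
  hadj S *m S = 1%:M ->
  hadj (Vdiag S) *m ((s *: ho_E l P - ho_A l P) *m (Vdiag S *m Xn)) =
    hadj (Vdiag S) *m ho_B l B ->
  hadj S *m Ps P s *m S *m cmp Xn i0 = hadj S *m B.
Proof.
move=> hS hX.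
have hrow i : hadj S *m cmp ((s *: ho_E l P - ho_A l P) *m (Vdiag S *m Xn)) i
     = hadj S *m cmp (ho_B l B) i by rewrite -!cmpVh hX.
have hg : forall i, cmp Xn i = s ^+ i *: cmp Xn i0.
  apply: geom => i k hk.
  have := hrow i; rewrite (cmpK_mid P s _ hk) cmpBc (mid_ne hk) mulmx0.
  by rewrite !cmpV scalemxAr -mulmxBr mulmxA hS mul1mx.
have hgZ : forall i, cmp (Vdiag S *m Xn) i = s ^+ i *: cmp (Vdiag S *m Xn) i0.
  by move=> i; rewrite !cmpV hg scalemxAr.
have := hrow ilast; rewrite (lastrow P hgZ) cmpBc /= eqxx cmpV.
by rewrite !mulmxA.
Qed.


Lemma lbnd_cZ m n (c : C) (f : C -> 'M[C]_(m, n)) s0 :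
  lbnd f s0 -> lbnd (fun s => c *: f s) s0.
Proof.
move=> h; apply: (lbnd_ext (f := fun s => (c%:M : 'M_m) *m f s)).
  by move=> s; rewrite mul_scalar_mx.
exact: lbnd_mul (lbnd_const _ _) h.
Qed.

Lemma lbnd_powZ m n i (A0 : 'M[C]_(m, n)) s0 : lbnd (fun s => s ^+ i *: A0) s0.
Proof.
elim: i => [|i IH].
  by apply: (lbnd_ext (f := fun _ => A0)) (lbnd_const _ _) => s; rewrite expr0 scale1r.
apply: (lbnd_ext (f := fun s => (s - s0) *: (s ^+ i *: A0) + s0 *: (s ^+ i *: A0))).
  by move=> s; rewrite -scalerDl subrK scalerA exprS.
exact: lbnd_add (lbnd_sig IH) (lbnd_cZ _ IH).
Qed.

Lemma lbnd_sum m n k (F : 'I_k -> C -> 'M[C]_(m, n)) s0 :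
  (forall i, lbnd (F i) s0) -> lbnd (fun s => \sum_(i < k) F i s) s0.
Proof.
elim: k F => [|k IH] F h.
  by apply: (lbnd_ext (f := fun _ => 0)) (lbnd_const _ _) => s; rewrite big_ord0.
apply: (lbnd_ext (f := fun s => \sum_(i < k) F (widen_ord (leqnSn k) i) s + F ord_max s)).
  by move=> s; rewrite big_ord_recr.
exact: lbnd_add (IH _ (fun i => h _)) (h _).
Qed.

Lemma lbnd_Ps (P : nat -> 'M[C]_N) s0 : lbnd (Ps P) s0.
Proof. exact: lbnd_sum (fun i => lbnd_powZ _ _ _). Qed.

Lemma hadj_sum m n k (F : 'I_k -> 'M[C]_(m, n)) :
  hadj (\sum_(i < k) F i) = \sum_(i < k) hadj (F i).
Proof.
elim: k F => [|k IH] F; first by rewrite !big_ord0 hadj0.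
by rewrite !big_ord_recr hadjD IH.
Qed.

Lemma hadj_Ps (P : nat -> 'M[C]_N) s :
  (forall i, (i <= l)%N -> is_hermitian (P i)) ->
  hadj (Ps P (Num.conj s)) = Ps P s.
Proof.
move=> hP; rewrite /Ps hadj_sum; apply: eq_bigr => i _.
by rewrite hadjZ rmorphXn /= conjCK hP // -ltnS.
Qed.

End CaseB.


Section CaseB2.
Variable C : numClosedFieldType.

Lemma case_b : (forall (N q l : nat) (P : nat -> 'M[C]_N)
     (B : 'M[C]_(N, q)) (D : 'M[C]_q) (s0 : C) (j n : nat)
     (S : 'M[C]_(N, n)),
   (0 < l)%N ->
   (forall i, (i <= l)%N -> is_hermitian (P i)) ->
   let E := ho_E l P in
   let A := ho_A l P in
   let Bc := ho_B l B in
   let Lc := ho_L l B in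
   s0 \is Num.real ->
   s0 *: E - A \in unitmx ->
   let M := krylovM E A s0 in
   let R := krylovR E A Bc s0 in
   (1 <= j <= jmax M R)%N ->
   n = nblk M R j ->
   hadj S *m S = 1%:M ->
   let Vn := \mxblock_(i < l, k < l) (if i == k then S else 0) in
   (krylov M R j <= Vn^T)%MS ->
   let En := hadj Vn *m E *m Vn in
   let An := hadj Vn *m A *m Vn in
   s0 *: En - An \in unitmx ->
   padeO D Lc E A Bc (Lc *m Vn) En An (hadj Vn *m Bc) s0 (2 * j)).
Proof.
move=> N q l P B D s0 j n S hl hP E A Bc Lc hr hT M R _ _ hS Vn hV En An hTn.
have hVd : Vn = Vdiag l S by [].
have hkry : forall i, (i < j)%N -> exists Dm, M ^+ i *m R = Vn *m Dm.
  move=> i hi.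
  have hs : ((M ^+ i *m R)^T <= Vn^T)%MS by apply: submx_trans (blk_in M R hi) hV.
  have [D' hD'] := submxP hs.
  by exists D'^T; rewrite -[LHS]trmxK hD' trmx_mul trmxK.
set T := s0 *: E - A.
set MR := M ^+ j *m R.
pose i0' := i0 hl.
pose K s := s *: E - A.
pose Z s := invmx (K s) *m T *m MR.
pose Q s := Vn *m invmx (s *: En - An) *m hadj Vn.
pose F s := hadj (cmp (Z (Num.conj s)) i0') *m Ps l P s
            *m cmp ((Q s *m K s - 1%:M) *m Z s) i0'.
have [d [d0 [c [c0 hKd]]]] := pencil_inv hT.
apply: (padeO_of (F := F)).
  have hZ : lbnd Z s0.
    apply: lbnd_mul _ (lbnd_const _ _); apply: lbnd_mul _ (lbnd_const _ _).
    exact: lbnd_inv.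
  have hZc : lbnd (fun s => cmp (Z s) i0') s0.
    apply: (lbnd_ext (f := fun s => cmp 1%:M i0' *m Z s)).
      by move=> s; rewrite -cmp_sel.
    exact: lbnd_mul (lbnd_const _ _) hZ.
  have hK : lbnd K s0 by exact: lbnd_pencil.
  have hQ : lbnd Q s0.
    apply: lbnd_mul _ (lbnd_const _ _); apply: lbnd_mul (lbnd_const _ _) _.
    exact: lbnd_inv.
  have h1 := lbnd_mul (lbnd_hadj_conj hr hZc) (lbnd_Ps l P s0).
  have h2 : lbnd (fun s => cmp ((Q s *m K s - 1%:M) *m Z s) i0') s0.
    apply: (lbnd_ext (f := fun s => cmp 1%:M i0' *m ((Q s *m K s - 1%:M) *m Z s))).
      by move=> s; rewrite -cmp_sel.
    apply: lbnd_mul (lbnd_const _ _) _; apply: lbnd_mul _ hZ.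
    exact: lbnd_add (lbnd_mul hQ hK) (lbnd_const _ _).
  exact: lbnd_mul h1 h2.
exists d; split => // s hs hKs hKns.
set sb := Num.conj s.
have hKbu : sb *: E - A \in unitmx.
  apply: (proj1 (hKd sb _)).
  by rewrite /sb -(conj_Creal hr) -rmorphB norm_conjC.
set X := invmx (K s) *m Bc.
set Xb := invmx (sb *: E - A) *m Bc.
set Xn := invmx (s *: En - An) *m (hadj Vn *m Bc).
have hKX : K s *m X = Bc by rewrite /X mulKVmx.
have hKXb : (sb *: E - A) *m Xb = Bc by rewrite /Xb mulKVmx.
have hKn : s *: En - An = hadj Vn *m K s *m Vn by rewrite pencil_proj.
have hKXn : hadj Vn *m (K s *m (Vn *m Xn)) = hadj Vn *m Bc.
  by rewrite !mulmxA -hKn /Xn mulmxV // mul1mx.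
have f1 := F1 hl hKX.
have f1b := F1 hl hKXb.
have f2 := F2 hl hS hKXn.
have hy : hadj (cmp Xb i0') *m Ps l P s = hadj B.
  by rewrite -(hadj_Ps _ hP) -hadjM f1b.
have hdiff : transfer D (Lc *m Vn) En An (hadj Vn *m Bc) s - transfer D Lc E A Bc s
    = hadj B *m cmp (Vn *m Xn - X) i0'.
  rewrite /transfer opprD addrACA subrr add0r -LcE.
  by rewrite mulmxBr /Xn /X !mulmxA.
rewrite hdiff cmpB cmpV -hy.
have [w hw] := krylov_sum hkry (fun i => (- (s - s0)) ^+ i).
have [wb hwb] := krylov_sum hkry (fun i => (- (sb - s0)) ^+ i).
have hX : X = Vn *m w + (- (s - s0)) ^+ j *: Z s.
  by rewrite /X /K (@expand C _ q E A Bc s0 s j hT hKs) hw.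
have hXb : Xb = Vn *m wb + (- (sb - s0)) ^+ j *: Z sb.
  by rewrite /Xb (@expand C _ q E A Bc s0 sb j hT hKbu) hwb.
have hxb : hadj (cmp Xb i0') = hadj (cmp wb i0') *m hadj S
    + (- (s - s0)) ^+ j *: hadj (cmp (Z sb) i0').
  rewrite hXb cmpD cmpZ cmpV hadjD hadjM hadjZ; congr (_ + _ *: _).
  by rewrite rmorphXn rmorphN /= conj_sig.
have e1 : hadj (cmp Xb i0') *m Ps l P s *m (S *m cmp Xn i0' - cmp X i0')
    = (- (s - s0)) ^+ j *: (hadj (cmp (Z sb) i0') *m Ps l P s *m (S *m cmp Xn i0' - cmp X i0')).
  rewrite {1}hxb !mulmxDl -!scalemxAl.
  rewrite -!mulmxA mulmxBr f1 (mulmxBr (hadj S)) !mulmxA f2 subrr mulmx0 add0r.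
  by [].
rewrite e1.
have hQVw : (Q s *m K s - 1%:M) *m (Vn *m w) = 0.
  rewrite mulmxBl mul1mx /Q -!mulmxA.
  have -> : hadj Vn *m (K s *m (Vn *m w)) = (s *: En - An) *m w by rewrite hKn !mulmxA.
  by rewrite mulKmx // subrr.
have e2 : Vn *m Xn - X = (- (s - s0)) ^+ j *: ((Q s *m K s - 1%:M) *m Z s).
  have -> : Vn *m Xn - X = (Q s *m K s - 1%:M) *m X.
    by rewrite mulmxBl mul1mx /Q /Xn -!mulmxA hKX.
  rewrite {1}hX mulmxDr hQVw add0r.
  by rewrite -scalemxAr.
have -> : S *m cmp Xn i0' - cmp X i0' = cmp (Vn *m Xn - X) i0' by rewrite cmpB cmpV.
rewrite e2 cmpZ -scalemxAr scalerA -exprMn mulrNN -expr2 -exprM.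
by [].
Qed.

End CaseB2.

End Aux.

Theorem theorem2 (C : numClosedFieldType) :
  (* case (a): Hermitian special second-order system *)
  (forall (N N0 q : nat) (first : bool)
     (P0 P1 : 'M[C]_N) (F : 'M[C]_(N, N0)) (G : 'M[C]_N0)
     (B : 'M[C]_(N, q)) (D : 'M[C]_q) (s0 : C) (j n : nat)
     (V : 'M[C]_(N + N0, n)),
   is_hermitian P0 -> is_hermitian P1 -> is_hermitian G ->
   (~~ first -> G \in unitmx) ->
   let E := sso_E first P1 G in
   let A := sso_A first P0 F G in
   let Bc : 'M[C]_(N + N0, q) := col_mx B 0 in
   let Lc : 'M[C]_(q, N + N0) := row_mx (hadj B) 0 in
   s0 \is Num.real ->
   s0 *: E - A \in unitmx ->
   let M := krylovM E A s0 in
   let R := krylovR E A Bc s0 in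
   (1 <= j <= jmax M R)%N ->
   n = nblk M R j ->
   (V^T == krylov M R j)%MS ->
   hadj (dsubmx V) *m G *m dsubmx V \in unitmx ->
   let Vn : 'M[C]_(N + N0, n + n) := block_mx (usubmx V) 0 0 (dsubmx V) in
   let En := hadj Vn *m E *m Vn in
   let An := hadj Vn *m A *m Vn in
   s0 *: En - An \in unitmx ->
   padeO D Lc E A Bc (Lc *m Vn) En An (hadj Vn *m Bc) s0 (2 * j))
  /\
  (* case (b): Hermitian l-th order system in companion form *)
  (forall (N q l : nat) (P : nat -> 'M[C]_N)
     (B : 'M[C]_(N, q)) (D : 'M[C]_q) (s0 : C) (j n : nat)
     (S : 'M[C]_(N, n)),
   (0 < l)%N ->
   (forall i, (i <= l)%N -> is_hermitian (P i)) ->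
   let E := ho_E l P in
   let A := ho_A l P in
   let Bc := ho_B l B in
   let Lc := ho_L l B in
   s0 \is Num.real ->
   s0 *: E - A \in unitmx ->
   let M := krylovM E A s0 in
   let R := krylovR E A Bc s0 in
   (1 <= j <= jmax M R)%N ->
   n = nblk M R j ->
   hadj S *m S = 1%:M ->
   let Vn := \mxblock_(i < l, k < l) (if i == k then S else 0) in
   (krylov M R j <= Vn^T)%MS ->
   let En := hadj Vn *m E *m Vn in
   let An := hadj Vn *m A *m Vn in
   s0 *: En - An \in unitmx ->
   padeO D Lc E A Bc (Lc *m Vn) En An (hadj Vn *m Bc) s0 (2 * j)).
Proof.
split.
- exact: (@Aux.case_a C).
- exact: (@Aux.case_b C).
Qed.
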